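(* Let $k\geq2$. There exist constants $c,C>0$ and $r_0\geq 1$ depending only on $k$ such that the following holds. For $1\leq i\leq k$ let $B_i\subset\mathbb{R}$ be finite, let $g_i$ be a strictly monotone real function and $A_i=g_i(B_i)$. Let $r\geq r_0$ with $r^{1/(k-1)}\leq |B_i+B_i-B_i|$ for all $i$, and let $X_r=\{x\in A_1+\dots+A_k:\ r\leq r_{A_1+\dots+A_k}(x)<2r\}$. Then for each $x\in X_r$ there are at least $cr$ pairs $(P,P')$ of distinct points $P=(b_1,\dots,b_k)$, $P'=(b_1',\dots,b_k')$ in $B_1\times\dots\times B_k$ such that (1) $g_1(b_1)+\dots+g_k(b_k)=x=g_1(b_1')+\dots+g_k(b_k')$, and (2) $n_{B_i}(b_i,b_i')\leq C\,|B_i+B_i-B_i|/r^{1/(k-1)}$ for all $1\leq i\leq k$.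
   Context: $r_{A_1+\dots+A_k}(x)$ is the number of tuples $(a_1,\dots,a_k)\in A_1\times\dots\times A_k$ with $a_1+\dots+a_k=x$. $B+B-B=\{b_1+b_2-b_3:b_j\in B\}$. For $b,b'\in B$, $n_B(b,b')$ denotes the number of elements of $B+B-B$ lying in the interval $(\min(b,b'),\max(b,b')]$. Such pairs $(P,P')$ are called lucky pairs associated with $x$. *)

(* Defs.v *)
From HB Require Import structures.
From mathcomp Require Import all_boot all_order all_algebra finmap.
From mathcomp Require Import reals exp.
Set Implicit Arguments. Unset Strict Implicit. Unset Printing Implicit Defensive.
Import Order.TTheory GRing.Theory Num.Theory.
Local Open Scope fset_scope.
Local Open Scope ring_scope.

Section Defs.
Variable R : realType.

Definition sumdiff (B : {fset R}) : {fset R} :=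
  [fset z - b | z in [fset b1 + b2 | b1 in B, b2 in B], b in B].

Definition nB (B : {fset R}) (b b' : R) : nat :=
  #|` [fset y in sumdiff B | (Num.min b b' < y) && (y <= Num.max b b')]|.

Fixpoint tuples (ss : seq (seq R)) : seq (seq R) :=
  match ss with
  | [::] => [:: [::]]
  | s :: ss' => [seq a :: t | a <- s, t <- tuples ss']
  end.

Definition rep (k : nat) (A : 'I_k -> {fset R}) (x : R) : nat :=
  count (fun t => \sum_(a <- t) a == x)
        (tuples [seq enum_fset (A i) | i <- enum 'I_k]).

Definition in_sumset (k : nat) (A : 'I_k -> {fset R}) (x : R) : Prop :=
  exists a : 'I_k -> R, (forall i, a i \in A i) /\ \sum_i a i = x.

Definition strictly_monotone (g : R -> R) : Prop :=
  (forall x y, x < y -> g x < g y) \/ (forall x y, x < y -> g y < g x).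

End Defs.

(* Main.v *)
Require Import Defs.
From HB Require Import structures.
From mathcomp Require Import all_boot all_order all_algebra finmap.
From mathcomp Require Import reals exp.
From mathcomp Require Import zify.
From mathcomp Require Import lra.
Import Order.TTheory GRing.Theory Num.Theory.
Local Open Scope fset_scope.
Local Open Scope ring_scope.

Lemma tuples_mem (R : realType) (ss : seq (seq R)) t :
  t \in tuples ss -> size t = size ss /\
  forall j, (j < size ss)%N -> nth 0 t j \in nth [::] ss j.
Proof.
elim: ss t => [|s ss IH] t /=.
  by rewrite inE => /eqP ->; split => // j.
case/allpairsP => [[a t'] [/= ha ht' ->]].
have [h1 h2] := IH _ ht'; split; first by rewrite /= h1.
by case=> [|j] //= hj; apply: h2.
Qed.

Lemma tuples_uniq (R : realType) (ss : seq (seq R)) :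
  all uniq ss -> uniq (tuples ss).
Proof.
elim: ss => [|s ss IH] //= /andP [us uss].
apply: allpairs_uniq => //; first exact: IH.
by move=> [a t] [b u] _ _ /= [-> ->].
Qed.

Lemma card_bigcup_le (T I : finType) (s : seq I) (F : I -> {set T}) :
  (#|(\bigcup_(i <- s) F i)%SET| <= \sum_(i <- s) #|F i|)%N.
Proof.
elim: s => [|i s IH]; first by rewrite !big_nil cards0.
rewrite !big_cons; apply: leq_trans (leq_card_setU _ _) _.
by rewrite leq_add2l.
Qed.
Lemma card_Zi k M (i : 'I_k) :
  #|[set w : {ffun 'I_k -> 'I_M.+1} | w i == ord0]| = (M.+1 ^ k.-1)%N.
Proof.
pose F := fun j : 'I_k => if j == i then (pred1 (@ord0 M) : pred 'I_M.+1) else predT.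
have -> : #|[set w : {ffun 'I_k -> 'I_M.+1} | w i == ord0]| = #|family F|.
  apply: eq_card => w; rewrite inE; apply/eqP/familyP => [h j|h].
    by rewrite /F; case: eqP => [->|]; rewrite ?h.
  by have := h i; rewrite /F eqxx => /eqP.
rewrite card_family foldrE big_map big_enum /= (bigD1 i) //= /F eqxx card1 mul1n.
rewrite (eq_bigr (fun _ => M.+1)); last by move=> j /negbTE ->; rewrite card_ord.
by rewrite prod_nat_const cardC1 card_ord.
Qed.

Lemma antichain k M (T : {set {ffun 'I_k -> 'I_M.+1}}) (i0 : 'I_k) :
  (forall v w, v \in T -> w \in T -> ~~ [forall i, (v i < w i)%N]) ->
  (#|T| <= k * M.+1 ^ k.-1)%N.
Proof.
move=> hT.
pose mn (v : {ffun 'I_k -> 'I_M.+1}) := nat_of_ord (v [arg min_(j < i0) v j]).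
have mnle v j : (mn v <= v j)%N.
  rewrite /mn; case: arg_minnP => // a _ h; exact: h.
pose nm (v : {ffun 'I_k -> 'I_M.+1}) : {ffun 'I_k -> 'I_M.+1} :=
  [ffun i => inord (v i - mn v)].
have nmE v i : nat_of_ord (nm v i) = (v i - mn v)%N.
  rewrite ffunE inordK //; rewrite ltnS; apply: leq_trans (leq_subr _ _) _.
  by rewrite -ltnS.
have inj : {in T &, injective nm}.
  move=> v w hv hw e.
  have e' i : (v i - mn v = w i - mn w)%N by rewrite -!nmE e.
  case: (ltngtP (mn v) (mn w)) => h.
  - have := hT v w hv hw; rewrite negb_forall => /existsP [i] /negP [].
    move: (e' i) (mnle v i) (mnle w i) h; move: (mn v) (mn w) (nat_of_ord (v i)) (nat_of_ord (w i)); clear; lia.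
  - have := hT w v hw hv; rewrite negb_forall => /existsP [i] /negP [].
    move: (e' i) (mnle v i) (mnle w i) h; move: (mn v) (mn w) (nat_of_ord (v i)) (nat_of_ord (w i)); clear; lia.
  apply/ffunP => i; apply/val_inj => /=.
  move: (e' i) (mnle v i) (mnle w i) h; move: (mn v) (mn w) (nat_of_ord (v i)) (nat_of_ord (w i)); clear; lia.
rewrite -(card_in_imset inj).
have sub : nm @: T \subset (\bigcup_(i <- enum 'I_k) [set w : {ffun 'I_k -> 'I_M.+1} | w i == ord0])%SET.
  apply/subsetP => w /imsetP [v hv ->].
  rewrite finset.bigcup_seq; apply/finset.bigcupP; exists [arg min_(j < i0) v j]; rewrite ?mem_enum //.
  rewrite inE; apply/eqP/val_inj => /=; rewrite nmE subnn //.
apply: leq_trans (subset_leq_card sub) _.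
apply: (leq_trans (card_bigcup_le _ _ _ _)).
rewrite big_enum /= (eq_bigr (fun _ => (M.+1 ^ k.-1)%N)); last by move=> i _; rewrite card_Zi.
by rewrite sum_nat_const card_ord.
Qed.

Lemma pair_count (Pt C : finType) (S : {set Pt}) (h : Pt -> C) :
  (#|S| <= #|[set pq : Pt * Pt | [&& pq.1 \in S, pq.2 \in S, pq.1 != pq.2 &
                                   h pq.1 == h pq.2]]| + #|h @: S|)%N.
Proof.
set Pr := [set pq : Pt * Pt | _].
pose Al := [set p in S | [forall q, (q \in S) ==> (q != p) ==> (h q != h p)]].
have sAl : Al \subset S by apply/subsetP => p; rewrite inE => /andP [].
rewrite -(cardsID Al S).
have -> : S :&: Al = Al by apply/setIidPr.
rewrite addnC; apply: leq_add.
  have sub : S :\: Al \subset fst @: Pr.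
    apply/subsetP => p; rewrite !inE => /andP [hn hp].
    move: hn; rewrite hp /= negb_forall => /existsP [q]; rewrite negb_imply => /andP [hq]; rewrite negb_imply negbK => /andP [hqp /eqP hh].
    apply/imsetP; exists (p, q) => //; rewrite inE /= hp hq eq_sym hqp hh eqxx.
    by [].
  exact: leq_trans (subset_leq_card sub) (leq_imset_card _ _).
have inj : {in Al &, injective h}.
  move=> p q; rewrite !inE => /andP [hp /forallP Hp] /andP [hq _] e.
  apply/eqP; apply: contraT => ne.
  have := Hp q; rewrite hq /= eq_sym ne /= e eqxx.
  by [].
rewrite -(card_in_imset inj); apply: subset_leq_card; exact: imsetS.
Qed.

Lemma rep_le (R : realType) k (B : 'I_k -> {fset R}) (g : 'I_k -> R -> R) (x : R) K :
 (forall i, injective (g i)) -> (forall i, (size (enum_fset (B i)) <= K)%N) ->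
 (rep (fun i => [fset g i b | b in B i]) x <=
  #|[set P : {ffun 'I_k -> 'I_K.+1} | [forall i, (P i < size (enum_fset (B i)))%N] &&
       ((\sum_i g i (nth 0%R (enum_fset (B i)) (P i)) == x)%R)]|)%N.
Proof.
move=> ginj hK.
set A := fun i => _.
set Pts := [set P : {ffun 'I_k -> 'I_K.+1} | _].
rewrite /rep -size_filter.
set LA := [seq enum_fset (A i) | i <- enum 'I_k].
set TA := filter _ (tuples LA).
have uTA : uniq TA.
  apply: filter_uniq; apply: tuples_uniq; apply/allP => s /mapP [i _ ->].
  exact: fset_uniq.
have sLA : size LA = k by rewrite size_map size_enum_ord.
have nLA (i : 'I_k) : nth [::] LA i = enum_fset (A i).
  by rewrite (nth_map i) ?size_enum_ord // nth_ord_enum.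
pose idx (i : 'I_k) (y : R) := index y (map (g i) (enum_fset (B i))).
have memA (i : 'I_k) y : y \in enum_fset (A i) -> y \in map (g i) (enum_fset (B i)).
  move=> hy; have : y \in A i by [].
  by case/imfsetP => b hb ->; apply: map_f.
have idx_lt (i : 'I_k) y : y \in enum_fset (A i) -> (idx i y < size (enum_fset (B i)))%N.
  by move=> /memA hy; rewrite /idx -(size_map (g i)) index_mem.
have idxK (i : 'I_k) y : y \in enum_fset (A i) -> g i (nth 0 (enum_fset (B i)) (idx i y)) = y.
  move=> hy; have hl := idx_lt i y hy.
  by rewrite -(nth_map 0 0) // nth_index // memA.
have memTA t : t \in TA -> size t = k /\ forall i : 'I_k, nth 0 t i \in enum_fset (A i).
  rewrite mem_filter => /andP [_ /tuples_mem [h1 h2]]; split; first by rewrite h1.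
  by move=> i; rewrite -nLA; apply: h2; rewrite sLA.
pose f t : {ffun 'I_k -> 'I_K.+1} := [ffun i => inord (idx i (nth 0 t i))].
have fE t (i : 'I_k) : t \in TA -> nat_of_ord (f t i) = idx i (nth 0 t i).
  move=> /memTA [_ h]; rewrite ffunE inordK // ltnS.
  exact: leq_trans (ltnW (idx_lt _ _ (h i))) (hK i).
have finj : {in TA &, injective f}.
  move=> t t' ht ht' e.
  have [s1 h1] := memTA _ ht; have [s2 h2] := memTA _ ht'.
  apply: (@eq_from_nth _ 0); first by rewrite s1 s2.
  move=> j; rewrite s1 => hj.
  have := congr1 (fun P : {ffun 'I_k -> 'I_K.+1} => nat_of_ord (P (Ordinal hj))) e => /=.
  rewrite !fE // => ei.
  by rewrite -(idxK _ _ (h1 (Ordinal hj))) ei idxK.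
rewrite -(size_map f).
have <- : #|[seq f t | t <- TA]| = size (map f TA).
  by apply/card_uniqP; rewrite map_inj_in_uniq.

apply: subset_leq_card; apply/subsetP => P /mapP [t ht ->].
rewrite inE; apply/andP; split.
  apply/forallP => i; rewrite fE //; apply: idx_lt; exact: (memTA _ ht).2.
have [st hm] := memTA _ ht.
have ht2 := ht; move: ht2; rewrite mem_filter => /andP [/eqP <- _].
rewrite (big_nth 0) st big_mkord; apply/eqP/eq_bigr => i _.
by rewrite (fE _ _ ht) idxK.
Qed.

Definition cntf (R : realType) (S : {fset R}) (y : R) : nat :=
  #|` [fset s in S | s <= y]|.
Arguments cntf {R}.

Lemma cntf_mono (R : realType) (S : {fset R}) y y' : y <= y' -> (cntf S y <= cntf S y')%N.
Proof.
move=> h; apply: fsubset_leq_card; apply/fsubsetP => s; rewrite !inE.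
by case/andP => -> /le_trans ->.
Qed.

Lemma cntf_le (R : realType) (S : {fset R}) y : (cntf S y <= #|` S|)%N.
Proof. exact/fsubset_leq_card/fset_sub. Qed.

Lemma nB_lt (R : realType) (S : {fset R}) b b' m : (0 < m)%N ->
  (cntf S b %/ m = cntf S b' %/ m)%N ->
  (#|` [fset y in S | ((Num.min b b' < y)%R && (y <= Num.max b b')%R)]| < m)%N.
Proof.
move=> hm.
wlog hb : b b' / b <= b'.
  move=> W; case/orP: (le_total b b') => h; first exact: W.
  by move=> e; rewrite minC maxC; apply: (W b' b) => //; rewrite e.
rewrite min_l // max_r // => e.
have := cardfsID [fset s in S | s <= b] [fset s in S | s <= b'].
have -> : [fset s in S | s <= b'] `&` [fset s in S | s <= b] = [fset s in S | s <= b].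
  apply/fsetP => y; rewrite !inE; case: (y \in S) => //=.
  case: (lerP y b) => h //=; [by rewrite (le_trans h hb) | by rewrite andbF].
have -> : [fset s in S | s <= b'] `\` [fset s in S | s <= b] =
          [fset y in S | (b < y) && (y <= b')].
  apply/fsetP => y; rewrite !inE; case: (y \in S) => //=.
  by rewrite -ltNge.
rewrite -/(cntf S b) -/(cntf S b') => e2.
move: e e2; set a := cntf S b; set a' := cntf S b'; set n := #|` _|.
move=> e e2.
have d1 := divn_eq a m; have d2 := divn_eq a' m.
have l1 := ltn_pmod a hm; have l2 := ltn_pmod a' hm.
rewrite -e in d2.
clearbody a a' n. nia.
Qed.

Lemma mono_cases (R : realType) (g : R -> R) : strictly_monotone g ->
  ((g 0 < g 1) -> forall a b, a < b -> g a < g b) /\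
  (~~ (g 0 < g 1) -> forall a b, a < b -> g b < g a).
Proof.
case=> h; split => hn.
- exact: h.
- by move: hn; rewrite h // ltr01.
- by move: (h 0 1 ltr01) => h1; move: (lt_trans hn h1); rewrite ltxx.
- exact: h.
Qed.

Arguments mono_cases {R g}.
Arguments cntf_le {R}.
Arguments cntf_mono {R}.
Arguments nB_lt {R}.

Theorem proposition3p2 (R : realType) (k : nat) (hk : (2 <= k)%N) :
  exists (c C r0 : R), 0 < c /\ 0 < C /\ 1 <= r0 /\
  forall (B : 'I_k -> {fset R}) (g : 'I_k -> R -> R) (r : R),
    (forall i, strictly_monotone (g i)) ->
    let A := fun i => [fset g i b | b in B i] in
    r0 <= r ->
    (forall i, r `^ (k.-1%:R)^-1 <= (#|` sumdiff (B i)|)%:R) ->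
    forall x : R,
      in_sumset A x -> r <= (rep A x)%:R < 2 * r ->
      exists s : seq ({ffun 'I_k -> R} * {ffun 'I_k -> R}),
        [/\ uniq s, c * r <= (size s)%:R &
          forall PP, PP \in s ->
            [/\ PP.1 != PP.2,
                forall i, PP.1 i \in B i /\ PP.2 i \in B i,
                \sum_i g i (PP.1 i) = x /\ \sum_i g i (PP.2 i) = x &
                forall i, (nB (B i) (PP.1 i) (PP.2 i))%:R
                          <= C * (#|` sumdiff (B i)|)%:R / r `^ (k.-1%:R)^-1]].
Proof.
have hk2 : 2%:R <= k%:R :> R by rewrite ler_nat.
pose beta : R := 4 * k%:R.
have hbeta1 : 1 <= beta by rewrite /beta; lra.
have hbeta0 : 0 < beta by apply: lt_le_trans hbeta1.
exists (2^-1), beta, (beta ^+ k.-1); split; first by rewrite invr_gt0.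
split=> //; split; first exact: exprn_ege1.
move=> B g r hg A hr0 hN x hx /andP [hrep _].
set j := k.-1.
have hj : (0 < j)%N by rewrite /j; lia.
have hr1 : 1 <= r by apply: le_trans hr0; exact: exprn_ege1.
have hr0' : 0 < r by apply: lt_le_trans hr1.
set L := r `^ (j%:R)^-1.
have hLj : L ^+ j = r.
  rewrite /L -powR_mulrn ?powR_ge0 // -powRrM mulVf ?powRr1 ?ltW //.
  by rewrite pnatr_eq0 -lt0n.
have hL0 : 0 < L by apply: powR_gt0.
have hbL : beta <= L.
  rewrite -(ler_pXn2r hj) ?nnegrE ?(ltW hbeta0) ?(ltW hL0) // hLj; exact: hr0.
set M := Num.truncn (L / beta).
have hLb : 1 <= L / beta by rewrite ler_pdivlMr // mul1r hbL.
have hMlt : L / beta < M.+1%:R := truncnS_gt _.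
have hMle : M%:R <= L / beta by rewrite truncn_le; apply: le_trans hLb.
set q : R := M.+1%:R.
have hq : beta * q <= 2 * L.
  have e1 : q = M%:R + 1 by rewrite /q -addn1 natrD.
  have e2 : L = beta * (L / beta) by rewrite mulrC divfK // gt_eqF.
  move: hMle hLb; set y := L / beta => hMle hLb.
  have : q <= 2 * y by lra.
  rewrite e2 => hqy.
  by rewrite mulrCA; apply: ler_wpM2l => //; exact: ltW.
have hkey : (k * M.+1 ^ j)%:R * 2 <= r.
  have h1 : (beta * q) ^+ j <= (2 * L) ^+ j.
    by rewrite ler_pXn2r // nnegrE ?mulr_ge0 // ltW.
  set t : R := 2 * k%:R.
  have eb : beta = 2 * t by rewrite /beta /t mulrA; congr (_ * _); lra.
  have ht1 : 1 <= t by rewrite /t; lra.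
  rewrite eb -mulrA !exprMn hLj ler_pM2l ?exprn_gt0 // in h1.
  have h3 : t * q ^+ j <= r.
    apply: le_trans h1; apply: ler_wpM2r; first exact: exprn_ge0.
    by rewrite -exprMn; apply: (ler_eXnr hj ht1).
  move: h3; rewrite /t natrM natrX -/q; nra.
have i0 : 'I_k := @Ordinal k 0 (leq_trans (isT : (0 < 2)%N) hk).
pose N i := #|` sumdiff (B i)|.
pose m i := ((N i) %/ M.+1).+1.
pose inc i := g i 0 < g i 1.
pose K := (\max_(i : 'I_k) size (enum_fset (B i)))%N.
pose Pts := [set P : {ffun 'I_k -> 'I_K.+1} | [forall i, (P i < size (enum_fset (B i)))%N] &&
       (\sum_i g i (nth 0 (enum_fset (B i)) (P i)) == x)].
have hPts : r <= #|Pts|%:R.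
  apply: le_trans hrep _; rewrite ler_nat; apply: rep_le.
    move=> i a b e; have [hi hd] := mono_cases (hg i).
    case: (ltgtP a b) => // h; case: (boolP (inc i)) => hinc.
    - by move: (hi hinc a b h); rewrite e ltxx.
    - by move: (hd hinc a b h); rewrite e ltxx.
    - by move: (hi hinc b a h); rewrite e ltxx.
    - by move: (hd hinc b a h); rewrite e ltxx.
  move=> i; rewrite /K; apply: (@leq_bigmax _ (fun i => size (enum_fset (B i))) i).
pose cv i (P : {ffun 'I_k -> 'I_K.+1}) :=
  (cntf (sumdiff (B i)) (nth 0%R (enum_fset (B i)) (P i)) %/ m i)%N.
have cvle i P : (cv i P <= M)%N.
  rewrite /cv -ltnS ltn_divLR //.
  apply: (leq_ltn_trans (cntf_le _ _)); rewrite -/(N i).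
  have h1 := divn_eq (N i) M.+1; have h2 := ltn_pmod (N i) (ltn0Sn M).
  move: h1 h2; rewrite /m; move: (N i %/ M.+1)%N => d; move: (N i %% M.+1)%N => rr.
  move=> -> h2; rewrite mulnS mulnC.
  rewrite (_ : (M.+1 * d.+1 = d + M * d + M.+1)%N) ?ltn_add2l //.
  by rewrite mulnS mulSn addnC.
pose oc (P : {ffun 'I_k -> 'I_K.+1}) : {ffun 'I_k -> 'I_M.+1} :=
  [ffun i => inord (if inc i then cv i P else M - cv i P)%N].
have ocE P i : nat_of_ord (oc P i) = (if inc i then cv i P else M - cv i P)%N.
  rewrite ffunE inordK // ltnS; case: ifP => _; [exact: cvle | exact: leq_subr].
pose Pr := [set pq : {ffun 'I_k -> 'I_K.+1} * {ffun 'I_k -> 'I_K.+1} |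
  [&& pq.1 \in Pts, pq.2 \in Pts, pq.1 != pq.2 & oc pq.1 == oc pq.2]].
have PrE pq : (pq \in Pr) = [&& pq.1 \in Pts, pq.2 \in Pts, pq.1 != pq.2 & oc pq.1 == oc pq.2].
  by rewrite in_set.
pose cf (P : {ffun 'I_k -> 'I_K.+1}) : {ffun 'I_k -> R} :=
  [ffun i => nth 0 (enum_fset (B i)) (P i)].
have cfinj : {in Pts &, injective cf}.
  move=> P P'; rewrite !inE => /andP [/forallP h1 _] /andP [/forallP h2 _] e.
  apply/ffunP => i; apply/val_inj/eqP.
  have := congr1 (fun f : {ffun 'I_k -> R} => f i) e; rewrite /cf !ffunE => /eqP.
  by rewrite nth_uniq // fset_uniq.
exists [seq (cf pq.1, cf pq.2) | pq <- enum Pr]; split.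
- rewrite map_inj_in_uniq ?enum_uniq // => [[P1 P2] [P3 P4]].
  rewrite !mem_enum !PrE /= => /and4P [h1 h2 _ _] /and4P [h3 h4 _ _] [e1 e2].
  by rewrite (cfinj P1 P3 h1 h3 e1) (cfinj P2 P4 h2 h4 e2).
- rewrite size_map -cardE.
  have hpc : (#|Pts| <= #|Pr| + #|oc @: Pts|)%N := pair_count _ _ Pts oc.
  have han : (#|oc @: Pts| <= k * M.+1 ^ j)%N.
    apply: (antichain _ _ (oc @: Pts) i0).
    move=> v w /imsetP [P hP ->] /imsetP [P' hP' ->]; apply/negP => /forallP hall.
    have hlt i : g i (nth 0 (enum_fset (B i)) (P i)) < g i (nth 0 (enum_fset (B i)) (P' i)).
      have := hall i; rewrite !ocE; have [hi hd] := mono_cases (hg i).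
      have c1 := cvle i P; have c2 := cvle i P'.
      case: ifP => hinc h.
      - apply: (hi hinc); rewrite ltNge; apply/negP => hle.
        have := leq_div2r (m i) (cntf_mono (sumdiff (B i)) _ _ hle).
        by rewrite -/(cv i P') -/(cv i P) leqNgt h.
      - apply: (hd (negbT hinc)); rewrite ltNge; apply/negP => hle.
        have := leq_div2r (m i) (cntf_mono (sumdiff (B i)) _ _ hle).
        rewrite -/(cv i P') -/(cv i P) => h'.
        move: h; rewrite ltn_sub2lE //; by rewrite ltnNge h'.
    have PtsE Q : (Q \in Pts) = [forall i, (Q i < size (enum_fset (B i)))%N] &&
       (\sum_i g i (nth 0 (enum_fset (B i)) (Q i)) == x) by rewrite in_set.
    move: hP hP'; rewrite !PtsE => /andP [_ /eqP s1] /andP [_ /eqP s2].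
    have : \sum_(i <- index_enum 'I_k | predT i) g i (nth 0 (enum_fset (B i)) (P i)) <
           \sum_(i <- index_enum 'I_k | predT i) g i (nth 0 (enum_fset (B i)) (P' i)).
      apply: ltr_sum; last by move=> i _; exact: hlt.
      by apply/hasP; exists i0; rewrite ?mem_index_enum.
    by rewrite s1 s2 ltxx.
  have hR : (#|Pts|%:R <= #|Pr|%:R + (k * M.+1 ^ j)%:R :> R).
    by rewrite -natrD ler_nat; exact: leq_trans hpc (leq_add (leqnn _) han).
  lra.
- move=> PP /mapP [[P P'] /=]; rewrite mem_enum PrE /= => /and4P [hP hP' hne /eqP hoc] ->.
  have PtsE Q : (Q \in Pts) = [forall i, (Q i < size (enum_fset (B i)))%N] &&
     (\sum_i g i (nth 0 (enum_fset (B i)) (Q i)) == x) by rewrite in_set.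
  have hP2 := hP; have hP'2 := hP'.
  move: hP2 hP'2; rewrite !PtsE => /andP [/forallP l1 /eqP s1] /andP [/forallP l2 /eqP s2].
  split => /=.
  + by apply: contra hne => /eqP e; apply/eqP; exact: cfinj.
  + by move=> i; rewrite !ffunE; split; apply: mem_nth.
  + by split; [rewrite -s1 | rewrite -s2]; apply: eq_bigr => i _; rewrite ffunE.
  + move=> i; rewrite !ffunE.
    have ecv : cv i P = cv i P'.
      have := congr1 (fun v : {ffun 'I_k -> 'I_M.+1} => nat_of_ord (v i)) hoc => /=.
      rewrite !ocE; have c1 := cvle i P; have c2 := cvle i P'.
      case: ifP => _ //; move: c1 c2; move: (cv i P) (cv i P') => u v; clear; lia.
    have hlt := nB_lt (sumdiff (B i)) _ _ (m i) (ltn0Sn _) ecv.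
    have hle : (nB (B i) (nth 0%R (enum_fset (B i)) (P i)) (nth 0%R (enum_fset (B i)) (P' i))
                <= N i %/ M.+1)%N by rewrite -ltnS.
    apply: le_trans (_ : (N i %/ M.+1)%:R <= _); first by rewrite ler_nat.
    have hd : ((N i %/ M.+1)%:R * q <= (N i)%:R :> R).
      by rewrite /q -natrM ler_nat leq_trunc_div.
    have hLq : L <= beta * q.
      by rewrite -ler_pdivrMl // mulrC ltW.
    rewrite ler_pdivlMr // -/(N i).
    have h0 : 0 <= ((N i %/ M.+1)%:R : R) by [].
    nra.
Qed.
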